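(* Let $(G,\vdash,\dashv)$ be a digroup with distinguished bar-unit $1$, let $E\subset G$ be the set of bar-units and $J\le G$ the group of inverses $\{x^{-1}:x\in G\}$, and let $x\circ y:=x\vdash y\dashv x^{-1}$. Then $G$ is isomorphic to the digroup $(E\times J,\vdash,\dashv)$ whose operations are defined by $$(u,h)\vdash(v,k)=(h\circ v,\ h\vdash k),\qquad (u,h)\dashv(v,k)=(u,\ h\dashv k)$$ for $u,v\in E$, $h,k\in J$.
   Context: A digroup $(G,\vdash,\dashv)$ is a set with two binary operations such that (G1) $(G,\vdash)$ and $(G,\dashv)$ are semigroups; (G2) $x\vdash(y\dashv z)=(x\vdash y)\dashv z$; (G3) $x\dashv(y\vdash z)=x\dashv(y\dashv z)$; (G4) $(x\dashv y)\vdash z=(x\vdash y)\vdash z$; (G5) there is a distinguished $1\in G$ with $1\vdash x=x\dashv 1=x$ for all $x$; (G6) every $x$ has $x^{-1}$ with $x\vdash x^{-1}=x^{-1}\dashv x=1$. A bar-unit is an $e$ with $e\vdash x=x\dashv e=x$ for all $x$. An isomorphism of digroups is a bijection preserving both operations. *)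

(* Defs.v *)
Set Implicit Arguments.

Definition is_digroup (G : Type) (vd dv : G -> G -> G) (one : G) (inv : G -> G) : Prop :=
  (forall x y z, vd x (vd y z) = vd (vd x y) z) /\
  (forall x y z, dv x (dv y z) = dv (dv x y) z) /\
  (forall x y z, vd x (dv y z) = dv (vd x y) z) /\
  (forall x y z, dv x (vd y z) = dv x (dv y z)) /\
  (forall x y z, vd (dv x y) z = vd (vd x y) z) /\
  (forall x, vd one x = x /\ dv x one = x) /\
  (forall x, vd x (inv x) = one /\ dv (inv x) x = one).

Definition bar_unit (G : Type) (vd dv : G -> G -> G) (e : G) : Prop :=
  forall x, vd e x = x /\ dv x e = x.

Definition in_J (G : Type) (inv : G -> G) (h : G) : Prop :=
  exists x, h = inv x.

Definition circ (G : Type) (vd dv : G -> G -> G) (inv : G -> G) (x y : G) : G :=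
  vd x (dv y (inv x)).

(* operations on E x J, carried on G * G *)
Definition pvd (G : Type) (vd dv : G -> G -> G) (inv : G -> G) (p q : G * G) : G * G :=
  (circ vd dv inv (snd p) (fst q), vd (snd p) (snd q)).
Definition pdv (G : Type) (dv : G -> G -> G) (p q : G * G) : G * G :=
  (fst p, dv (snd p) (snd q)).

(* Main.v *)
Require Import Defs.
From Stdlib Require Import Setoid.

Theorem theorem4p8 (G : Type) (vd dv : G -> G -> G) (one : G) (inv : G -> G) :
  is_digroup vd dv one inv ->
  exists f : G -> G * G,
    (* f is a bijection from G onto E x J *)
    (forall x, bar_unit vd dv (fst (f x)) /\ in_J inv (snd (f x))) /\
    (forall x y, f x = f y -> x = y) /\
    (forall u h, bar_unit vd dv u -> in_J inv h -> exists x, f x = (u, h)) /\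
    (* f preserves both operations *)
    (forall x y, f (vd x y) = pvd vd dv inv (f x) (f y)) /\
    (forall x y, f (dv x y) = pdv dv (f x) (f y)).
Proof.
  intros [A1 [A2 [G2 [G3 [G4 [U I]]]]]].
  assert (UL : forall x, vd one x = x) by (intro x; apply (U x)).
  assert (UR : forall x, dv x one = x) by (intro x; apply (U x)).
  assert (IR : forall x, vd x (inv x) = one) by (intro x; apply (I x)).
  assert (IL : forall x, dv (inv x) x = one) by (intro x; apply (I x)).
  assert (CA : forall x y, dv x (dv one y) = dv x y).
  { intros x y. rewrite <- G3. now rewrite UL. }
  assert (II : forall x, inv (inv x) = dv one x).
  { intro x. rewrite <- (UR (inv (inv x))). rewrite <- (IL x) at 1. rewrite A2, (IL (inv x)). reflexivity. }
  assert (JF : forall x, dv one (inv x) = inv x).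
  { intro x. rewrite <- (IL x) at 1. rewrite <- A2.
    rewrite <- G3, IR. apply UR. }
  assert (H1 : forall z, vd z one = dv one z).
  { intro z. rewrite <- (IL z) at 1. rewrite G2, IR. reflexivity. }
  assert (BU : forall x, bar_unit vd dv (dv x (inv x))).
  { intros x w. split.
    - rewrite G4, IR. apply UL.
    - rewrite <- G3, IR. apply UR. }
  assert (one1 : dv one one = one) by apply UR.
  assert (Jin : forall k, dv one k = k -> in_J inv k).
  { intros k Hk. exists (inv k). rewrite II. now symmetry. }
  set (f := fun x => (dv x (inv x), dv one x)).
  assert (DEC : forall x, dv (dv x (inv x)) (dv one x) = x).
  { intro x. rewrite CA, <- A2, IL. apply UR. }
  assert (LF : forall u k, bar_unit vd dv u -> dv one k = k -> f (dv u k) = (u, k)).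
  { intros u k Hu Hk. unfold f. f_equal.
    - set (ix := inv (dv u k)).
      assert (E1 : vd k ix = one).
      { rewrite <- (IR (dv u k)). fold ix. rewrite G4. f_equal. symmetry. apply Hu. }
      assert (Jix : dv one ix = ix) by apply JF.
      assert (E2 : dv k ix = one).
      { rewrite <- E1. rewrite <- Hk at 1. rewrite <- H1, <- G2, Jix. reflexivity. }
      rewrite <- A2, E2. apply UR.
    - rewrite A2. replace (dv one u) with one. exact Hk.
      symmetry. apply Hu. }
  exists f. split; [|split; [|split; [|split]]].
  - intro x. split. apply BU. apply Jin. simpl. rewrite A2, one1. reflexivity.
  - intros x y Hxy. rewrite <- (DEC x), <- (DEC y). unfold f in Hxy.
    injection Hxy. intros -> ->. reflexivity.
  - intros u h Hu [y ->]. exists (dv u (inv y)). apply LF; auto.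
  - intros x y. unfold pvd, circ. simpl.
    set (h := dv one x). set (v := dv y (inv y)). set (k := dv one y).
    assert (Hk : dv one k = k) by (unfold k; rewrite A2, one1; reflexivity).
    assert (Hh : dv one h = h) by (unfold h; rewrite A2, one1; reflexivity).
    assert (Hv : bar_unit vd dv v) by apply BU.
    assert (E : vd x y = dv (vd h (dv v (inv h))) (vd h k)).
    { rewrite <- (DEC x). rewrite G4. fold h. rewrite (proj1 (BU x _)).
      rewrite <- (DEC y). fold v k.
      rewrite !G2. rewrite <- A2. f_equal. rewrite G3, A2, IL. symmetry. exact Hk. }

    rewrite E. apply LF.
    + intro w. split.
      * rewrite G2, G4, <- !A1, (proj1 (Hv _)), A1, IR. apply UL.
      * rewrite G2, A2, G3, A2, (proj2 (Hv _)), <- A2.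
        rewrite <- G3, IR. apply UR.
    + assert (Hhk : vd h k = dv h k).
      { rewrite <- Hk at 1. rewrite G2, H1, Hh. reflexivity. }
      rewrite Hhk, A2, Hh. reflexivity.
  - intros x y. unfold pdv. simpl.
    replace (dv x y) with (dv (dv x (inv x)) (dv (dv one x) (dv one y))).
    + apply LF. apply BU. rewrite !A2, one1. reflexivity.
    + rewrite A2, DEC, CA. reflexivity.
Qed.
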